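(* Let $G$ be a connected graph on vertex set $[n]$ and $\pi$ a permutation of $[n]$ with $rt(G,\pi)>1$. Then $rt(G,\pi)=2$ if and only if the graph $G_{cycle(\pi)}$ has a perfect matching, where a perfect matching is allowed to cover a vertex by a self-loop at that vertex.
   Context: Routing via matchings: each vertex $i$ of $G$ initially holds a pebble which must be moved to vertex $\pi(i)$. A step consists of choosing a matching of $G$ and swapping the pebbles at the endpoints of every matched edge. $rt(G,\pi)$ is the minimum number of steps needed to route all pebbles to their destinations. A cycle of $\pi$ is identified with its vertex set. A cycle $C$ is individually routable (in 2 steps) if its pebbles can be routed to their destinations in at most 2 steps using only edges of the induced subgraph $G[C]$. Two cycles $C_1,C_2$ are mutually routable in 2 steps if the pebbles on $C_1\cup C_2$ can be routed to their destinations in at most 2 steps using only edges of $G$ with one endpoint in $C_1$ and the other in $C_2$. $G_{cycle(\pi)}$ is the graph whose vertices are the cycles of $\pi$, in which two distinct cycles are adjacent iff they are mutually routable in 2 steps, and which has a self-loop at each cycle that is individually routable. *)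

(* Defs.v *)
From mathcomp Require Import all_boot all_fingroup.
From Stdlib Require Import ClassicalEpsilon.
Set Implicit Arguments. Unset Strict Implicit. Unset Printing Implicit Defensive.

(* A routing step: choosing a matching whose edges lie in the edge relation E
   and swapping the pebbles at the endpoints of every matched edge.  The effect
   of the step is the involution s : {perm 'I_n} exchanging the two endpoints
   of each matched edge and fixing unmatched vertices; conversely every such
   involution whose moved points are joined by E-edges comes from a matching. *)
Definition matching_step (n : nat) (E : rel 'I_n) (s : {perm 'I_n}) : Prop :=
  forall v : 'I_n, s (s v) = v /\ (s v != v -> E v (s v)).

(* Position reached by the pebble starting at v after performing the steps
   of ss in order (head of the list first). *)
Definition route (n : nat) (ss : seq {perm 'I_n}) (v : 'I_n) : 'I_n :=
  foldl (fun w (s : {perm 'I_n}) => s w) v ss.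

Definition routable_in (n : nat) (G : rel 'I_n) (pi : {perm 'I_n}) (k : nat) : Prop :=
  exists ss : seq {perm 'I_n},
    size ss = k /\ (forall s, s \in ss -> matching_step G s) /\
    (forall v, route ss v = pi v).

Definition routable_inb n (G : rel 'I_n) (pi : {perm 'I_n}) (k : nat) : bool :=
  if excluded_middle_informative (routable_in G pi k) then true else false.

(* rt(G, pi): the minimum number of steps (0 if pi is not routable at all,
   which never happens for connected G). *)
Definition rt (n : nat) (G : rel 'I_n) (pi : {perm 'I_n}) : nat :=
  match excluded_middle_informative (exists k, routable_inb G pi k) with
  | left H => ex_minn H
  | right _ => 0
  end.

Definition simple_graph n (G : rel 'I_n) : Prop := symmetric G /\ irreflexive G.
Definition connected_graph n (G : rel 'I_n) : Prop := forall u v, connect G u v.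

Definition induced_rel n (G : rel 'I_n) (C : {set 'I_n}) : rel 'I_n :=
  fun u v => [&& G u v, u \in C & v \in C].
Definition between_rel n (G : rel 'I_n) (C1 C2 : {set 'I_n}) : rel 'I_n :=
  fun u v => G u v && (((u \in C1) && (v \in C2)) || ((u \in C2) && (v \in C1))).

Definition routable2_on n (E : rel 'I_n) (pi : {perm 'I_n}) (D : {set 'I_n}) : Prop :=
  exists ss : seq {perm 'I_n},
    size ss <= 2 /\ (forall s, s \in ss -> matching_step E s) /\
    (forall v, v \in D -> route ss v = pi v).

Definition indiv_routable n (G : rel 'I_n) (pi : {perm 'I_n}) (C : {set 'I_n}) : Prop :=
  routable2_on (induced_rel G C) pi C.

Definition mutual_routable n (G : rel 'I_n) (pi : {perm 'I_n}) (C1 C2 : {set 'I_n}) : Prop :=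
  routable2_on (between_rel G C1 C2) pi (C1 :|: C2).

(* The graph G_cycle(pi): vertices are the cycles of pi (porbits pi);
   adjacency of C1, C2 (self-loop when C1 = C2). *)
Definition gcycle_adj n (G : rel 'I_n) (pi : {perm 'I_n}) (C1 C2 : {set 'I_n}) : Prop :=
  if C1 == C2 then indiv_routable G pi C1 else mutual_routable G pi C1 C2.

(* A perfect matching of G_cycle(pi) in which a vertex may be covered by its
   self-loop: a set M of edges ({C1, C2} with C1 <> C2, or loops {C}) of
   G_cycle(pi) such that every cycle lies in exactly one edge of M. *)
Definition gcycle_has_perfect_matching n (G : rel 'I_n) (pi : {perm 'I_n}) : Prop :=
  exists M : {set {set {set 'I_n}}},
    (forall e, e \in M -> exists C1 C2,
        [/\ C1 \in porbits pi, C2 \in porbits pi, e = [set C1; C2] & gcycle_adj G pi C1 C2]) /\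
    (forall C, C \in porbits pi -> exists! e, e \in M /\ C \in e).

(* Main.v *)
Require Import Defs.
From mathcomp Require Import all_boot all_fingroup.
From Stdlib Require Import ClassicalEpsilon.
Set Implicit Arguments. Unset Strict Implicit. Unset Printing Implicit Defensive.

Lemma routable_inbP n (G : rel 'I_n) pi k : routable_inb G pi k <-> routable_in G pi k.
Proof. by rewrite /routable_inb; case: excluded_middle_informative. Qed.

Lemma rt_eq2 n (G : rel 'I_n) pi : 1 < rt G pi -> routable_in G pi 2 -> rt G pi = 2.
Proof.
move=> H1 H2; move: H1; rewrite /rt; case: excluded_middle_informative => [ex|nex]; last first.
  by exfalso; apply: nex; exists 2; apply/routable_inbP.
case: ex_minnP => m _ Hm Hlt; apply/eqP; rewrite eqn_leq Hlt andbT.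
by apply: Hm; apply/routable_inbP.
Qed.

Lemma rt2_routable n (G : rel 'I_n) pi : rt G pi = 2 -> routable_in G pi 2.
Proof.
rewrite /rt; case: excluded_middle_informative => [ex|//].
by case: ex_minnP => m Hm _ <-; apply/routable_inbP.
Qed.
Lemma restr (T : finType) (s : {perm T}) (D : {set T}) :
  (forall w, s (s w) = w) -> (forall w, w \in D -> s w \in D) ->
  {a : {perm T} | forall w, a w = if w \in D then s w else w}.
Proof.
move=> Hs HD; pose f w := if w \in D then s w else w.
have K : cancel f f.
  by move=> w; rewrite /f; case wD: (w \in D); rewrite ?HD ?Hs ?wD.
by exists (perm (can_inj K)) => w; rewrite permE.
Qed.

Lemma routable_restrict n (E : rel 'I_n) (pi s1 s2 : {perm 'I_n}) (D : {set 'I_n}) :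
 (forall w, s1 (s1 w) = w) -> (forall w, s2 (s2 w) = w) ->
 (forall w, w \in D -> s1 w \in D) -> (forall w, w \in D -> s2 w \in D) ->
 (forall w, w \in D -> s1 w != w -> E w (s1 w)) ->
 (forall w, w \in D -> s2 w != w -> E w (s2 w)) ->
 (forall w, w \in D -> s2 (s1 w) = pi w) -> routable2_on E pi D.
Proof.
move=> H1 H2 D1 D2 E1 E2 Hr.
have [a Ha] := restr H1 D1; have [b Hb] := restr H2 D2.
have ms : forall (s c : {perm 'I_n}), (forall w, s (s w) = w) ->
  (forall w, w \in D -> s w \in D) -> (forall w, w \in D -> s w != w -> E w (s w)) ->
  (forall w, c w = if w \in D then s w else w) -> matching_step E c.
  move=> s c Hs Ds Es Hc v; rewrite !Hc; case vD: (v \in D); last by rewrite vD eqxx.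
  by rewrite Ds // Hs; split => // ?; apply: Es.
exists [:: a; b]; split => //; split.
  by move=> s; rewrite !inE => /orP[]/eqP->; [exact: ms Ha| exact: ms Hb].
by move=> v vD; rewrite /route /= Hb Ha vD D1 // Hr.
Qed.

Section Fwd.
Local Open Scope group_scope.
Variables (n : nat) (pi s1 s2 : {perm 'I_n}).
Hypotheses (H1 : forall w, s1 (s1 w) = w) (H2 : forall w, s2 (s2 w) = w)
  (Hpi : forall w, pi w = s2 (s1 w)).

Lemma s1pi x : s1 (pi x) = pi^-1 (s1 x).
Proof.
have : pi (s1 (pi x)) = s1 x by rewrite Hpi H1 Hpi H2.
by move <-; rewrite permK.
Qed.

Lemma s1_orbit v w : w \in porbit pi v -> s1 w \in porbit pi (s1 v).
Proof.
move=> /porbitP [k ->]; rewrite -porbitV; apply/porbitP; exists k.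
elim: k => [|k IH]; first by rewrite !expg0 !perm1.
by rewrite !expgSr !permM s1pi IH.
Qed.

Lemma s1_orbitE v w : w \in porbit pi v -> porbit pi (s1 w) = porbit pi (s1 v).
Proof. by move=> H; apply/eqP; rewrite eq_porbit_mem s1_orbit. Qed.

Lemma pi_orbit v w : w \in porbit pi v -> pi w \in porbit pi v.
Proof.
by move=> /porbitP [k ->]; apply/porbitP; exists k.+1; rewrite expgSr permM.
Qed.

Lemma s2E w : s2 w = pi (s1 w).
Proof. by rewrite Hpi H1. Qed.

Variable G : rel 'I_n.
Hypotheses (M1 : matching_step G s1) (M2 : matching_step G s2).

Lemma fwd : gcycle_has_perfect_matching G pi.
Proof.
pose O v := porbit pi v.
exists [set [set O v; O (s1 v)] | v : 'I_n]; split.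
  move=> e /imsetP [v _ ->]; exists (O v), (O (s1 v)); split => //; try exact: imset_f.
  have sw1 w : w \in O v -> s1 w \in O (s1 v) by apply: s1_orbit.
  have sw2 w : w \in O (s1 v) -> s1 w \in O v.
    by move=> /s1_orbit; rewrite H1.
  have tw1 w : w \in O v -> s2 w \in O (s1 v) by move=> /sw1; rewrite s2E //; apply: pi_orbit.
  have tw2 w : w \in O (s1 v) -> s2 w \in O v by move=> /sw2; rewrite s2E //; apply: pi_orbit.
  have hr w : s2 (s1 w) = pi w by rewrite Hpi.
  rewrite /gcycle_adj; case: eqP => [Eq|Neq].
    rewrite /indiv_routable; apply: (routable_restrict H1 H2) => //.
    - by move=> w /sw1; rewrite -Eq.
    - by move=> w /tw1; rewrite -Eq.
    - move=> w wD nw; rewrite /induced_rel wD (proj2 (M1 w) nw) /=.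
      by have := sw1 _ wD; rewrite -Eq.
    - move=> w wD nw; rewrite /induced_rel wD (proj2 (M2 w) nw) /=.
      by have := tw1 _ wD; rewrite -Eq.
  rewrite /mutual_routable; apply: (routable_restrict H1 H2) => //.
  - by move=> w; rewrite !inE => /orP[/sw1->|/sw2->]; rewrite ?orbT.
  - by move=> w; rewrite !inE => /orP[/tw1->|/tw2->]; rewrite ?orbT.
  - move=> w; rewrite !inE /between_rel => /orP[wD|wD] nw; rewrite (proj2 (M1 w) nw) wD /=.
      by rewrite sw1.
    by rewrite sw2 ?orbT.
  - move=> w; rewrite !inE /between_rel => /orP[wD|wD] nw; rewrite (proj2 (M2 w) nw) wD /=.
      by rewrite tw1.
    by rewrite tw2 ?orbT.
move=> C /imsetP [v _ ->]; exists [set O v; O (s1 v)]; split.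
  by split; [apply: imset_f | rewrite set21].
move=> e [/imsetP [u _ ->]]; rewrite !inE => /orP[]/eqP Hv.
  have : v \in O u by rewrite -Hv /O porbit_id.
  move=> /s1_orbitE E. rewrite -Hv. rewrite /O -E. done.
have : v \in O (s1 u) by rewrite -Hv /O porbit_id.
move=> /s1_orbitE; rewrite H1 => E.
rewrite -Hv /O -E. by rewrite setUC.
Qed.
End Fwd.
Section Bwd.
Variables (n : nat) (G : rel 'I_n) (pi : {perm 'I_n}).

Definition Dset (e : {set {set 'I_n}}) := [set w | porbit pi w \in e].

Definition Pe (e : {set {set 'I_n}}) (ab : {perm 'I_n} * {perm 'I_n}) :=
  [/\ matching_step G ab.1, matching_step G ab.2,
      (forall w, w \in Dset e -> ab.1 w \in Dset e),
      (forall w, w \in Dset e -> ab.2 w \in Dset e) &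
      (forall w, w \in Dset e -> ab.2 (ab.1 w) = pi w)].

Lemma Dset2 C1 C2 : C1 \in porbits pi -> C2 \in porbits pi ->
  Dset [set C1; C2] = C1 :|: C2.
Proof.
move=> /imsetP[x1 _ ->] /imsetP[x2 _ ->]; apply/setP => w.
by rewrite !inE !eq_porbit_mem.
Qed.

Lemma ms1 (E : rel 'I_n) : matching_step E 1%g.
Proof. by move=> v; rewrite !perm1 eqxx. Qed.

Lemma edge_ok e : (exists C1 C2,
        [/\ C1 \in porbits pi, C2 \in porbits pi, e = [set C1; C2] & gcycle_adj G pi C1 C2])
  -> exists ab, Pe e ab.
Proof.
move=> [C1 [C2 [P1 P2 -> Hadj]]].
rewrite /Pe Dset2 //.
have [E [EG ED [ss [Hsz [Hms Hr]]]]] : exists E : rel 'I_n, let D := C1 :|: C2 in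
   [/\ (forall u w, E u w -> G u w), (forall u w, E u w -> u \in D -> w \in D) &
     routable2_on E pi D].
  move: Hadj; rewrite /gcycle_adj /=; case: eqP => [<-|_] H.
    exists (induced_rel G C1); split => //.
    - by move=> u w /and3P[].
    - by move=> u w /and3P[_ _ wC] _; rewrite inE wC.
    - by rewrite setUid.
  exists (between_rel G C1 C2); split => //.
  - by move=> u w /andP[].
  by move=> u w /andP[_] /orP[]/andP[_ wC] _; rewrite inE wC ?orbT.
have msn (i : nat) : matching_step E (nth 1%g ss i).
  case: (ltnP i (size ss)) => hi; first by apply: Hms; apply: mem_nth.
  by rewrite nth_default //; apply: ms1.
have pres (i : nat) w : w \in C1 :|: C2 -> nth 1%g ss i w \in C1 :|: C2.
  move=> wD; case: (eqVneq (nth 1%g ss i w) w) => [->//|ne].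
  by apply: (ED w) => //; apply: (proj2 (msn i w)).
have toG (i : nat) : matching_step G (nth 1%g ss i).
  by move=> v; have [h1 h2] := msn i v; split => // /h2; apply: EG.
exists (nth 1%g ss 0, nth 1%g ss 1); split => //= [w|w|w wD]; try exact: pres.
rewrite -Hr //; move: Hsz; case: ss {Hms Hr msn pres toG} => [|x [|y [|z s]]] //= _.
- by rewrite !perm1.
- by rewrite perm1.
Qed.


Lemma bwd : gcycle_has_perfect_matching G pi -> routable_in G pi 2.
Proof.
move=> [M [HM Hcov]].
have HF e : exists ab, e \in M -> Pe e ab.
  case: (boolP (e \in M)) => [eM|eM]; last by exists (1%g, 1%g).
  by have [ab H] := edge_ok (HM e eM); exists ab.
pose F e := proj1_sig (constructive_indefinite_description _ (HF e)).
have FP e : e \in M -> Pe e (F e).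
  exact: (proj2_sig (constructive_indefinite_description _ (HF e))).
pose ev v := odflt set0 [pick e in M | porbit pi v \in e].
have inP v : porbit pi v \in porbits pi by apply: imset_f.
have evP v : ev v \in M /\ porbit pi v \in ev v.
  rewrite /ev; case: pickP => [e /andP[]|none] //=.
  have [e [[eM Ce] _]] := Hcov (porbit pi v) (inP v).
  by have := none e; rewrite eM Ce.
have evU v e : e \in M -> porbit pi v \in e -> ev v = e.
  move=> eM Ce; have [e' [_ U]] := Hcov (porbit pi v) (inP v).
  by rewrite -(U e (conj eM Ce)) (U (ev v) (evP v)).
have vD v : v \in Dset (ev v) by rewrite inE (proj2 (evP v)).
pose fa v := (F (ev v)).1 v.
pose fb v := (F (ev v)).2 v.
have Pv v := FP _ (proj1 (evP v)).
have eva v : ev (fa v) = ev v.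
  have [_ _ p1 _ _] := Pv v; have := p1 v (vD v); rewrite inE => h.
  exact: evU (proj1 (evP v)) h.
have evb v : ev (fb v) = ev v.
  have [_ _ _ p2 _] := Pv v; have := p2 v (vD v); rewrite inE => h.
  exact: evU (proj1 (evP v)) h.
have faK : cancel fa fa.
  move=> v; rewrite {1}/fa eva; have [m1 _ _ _ _] := Pv v; exact: (proj1 (m1 v)).
have fbK : cancel fb fb.
  move=> v; rewrite {1}/fb evb; have [_ m2 _ _ _] := Pv v; exact: (proj1 (m2 v)).
exists [:: perm (can_inj faK); perm (can_inj fbK)]; split => //; split.
  move=> s; rewrite !inE => /orP[]/eqP-> v; rewrite !permE.
    split; first exact: faK.
    by have [m1 _ _ _ _] := Pv v; apply: (proj2 (m1 v)).
  split; first exact: fbK.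
  by have [_ m2 _ _ _] := Pv v; apply: (proj2 (m2 v)).
move=> v; rewrite /route /= !permE /fb eva.
by have [_ _ _ _ r] := Pv v; apply: r.
Qed.
End Bwd.

Theorem lemma2 (n : nat) (G : rel 'I_n) (pi : {perm 'I_n}) :
  simple_graph G -> connected_graph G -> 1 < rt G pi ->
  (rt G pi = 2 <-> gcycle_has_perfect_matching G pi).
Proof.
move=> _ _ Hgt; split; last by move=> HM; apply: rt_eq2 Hgt (bwd HM).
move=> H2; have [ss [Hsz [Hms Hr]]] := rt2_routable H2.
case: ss Hsz Hms Hr => [|s1 [|s2 [|? ?]]] //= _ Hms Hr.
have M1 : matching_step G s1 by apply: Hms; rewrite mem_head.
have M2 : matching_step G s2 by apply: Hms; rewrite !inE eqxx orbT.
apply: (@fwd n pi s1 s2) => //.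
- by move=> w; apply: (proj1 (M1 w)).
- by move=> w; apply: (proj1 (M2 w)).
Qed.
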